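(* Let $G=SL(2,\mathbb{C})$ and let $B_1,B_2\in G$ satisfy $\mathsf{tr}([B_1,B_2])\neq 2$ (where $[B_1,B_2]=B_1B_2B_1^{-1}B_2^{-1}$). Then there exists $g\in G$ such that $A_j:=gB_jg^{-1}$, $j=1,2$, satisfy $A_j^T=A_j$. Let $n\ge 3$ and $\mathbf{r}=(t_1,t_2,t_{12})=(\mathsf{tr}A_1,\mathsf{tr}A_2,\mathsf{tr}(A_1A_2))$. Then for any $\mathbf{s}\in\mathbb{C}^{3n-6}$ there exist $A_3,\dots,A_n\in SL(2,\mathbb{C})$ such that $T_n(A_1,\dots,A_n)=(\mathbf{r},\mathbf{s})$. Moreover, given any $A=(A_1,\dots,A_n)\in G^{\times n}$ with $T_n(A)=(\mathbf{r},\mathbf{s})$, $\mathsf{tr}([A_1,A_2])\neq 2$, $A_1^T=A_1$ and $A_2^T=A_2$, the preimage $T_n^{-1}(\mathbf{r},\mathbf{s})$ consists of the $G$-orbits (under simultaneous conjugation) of the points of the finite set $\{(A_1,A_2,C_3,\dots,C_n): C_j=A_j \text{ or } C_j=A_j^T \text{ for } j=3,\dots,n\}$.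
   Context: $T$ denotes transposition. The Magnus trace map $T_n:G^{\times n}\to\mathbb{C}^{3n-3}$ is $T_n(A_1,\dots,A_n)=(t_1,t_2,t_{12},t_3,t_{13},t_{23},\dots,t_k,t_{1k},t_{2k},\dots,t_n,t_{1n},t_{2n})$, where $t_j=\mathsf{tr}(A_j)$ and $t_{jk}=\mathsf{tr}(A_jA_k)$. $G$ acts on $G^{\times n}$ by $g\cdot(A_1,\dots,A_n)=(gA_1g^{-1},\dots,gA_ng^{-1})$. *)

(* Defs.v *)
(* Complex numbers are modelled as R[i] = complex R for an
   arbitrary R : realType (every realType is a model of the reals). *)
From HB Require Import structures.
From mathcomp Require Import all_boot all_order all_algebra.
From mathcomp Require Import reals.
From mathcomp Require Export complex.
Set Implicit Arguments. Unset Strict Implicit. Unset Printing Implicit Defensive.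
Import Order.TTheory GRing.Theory Num.Theory.
Local Open Scope ring_scope.

Definition SL2 {C : comUnitRingType} (M : 'M[C]_2) : bool := \det M == 1.

Definition conjm {C : comUnitRingType} (g M : 'M[C]_2) : 'M[C]_2 := g * M * g^-1.

Definition commm {C : comUnitRingType} (B1 B2 : 'M[C]_2) : 'M[C]_2 :=
  B1 * B2 * B1^-1 * B2^-1.

(* Magnus trace map on a tuple A = [:: A_1; ...; A_n] (stored 0-based):
   (t1, t2, t12, t3, t13, t23, ..., tn, t1n, t2n). *)
Definition Tn {C : comUnitRingType} (A : seq 'M[C]_2) : seq C :=
  let a j := nth 0 A j in
  [:: \tr (a 0%N); \tr (a 1%N); \tr (a 0%N * a 1%N)] ++
  flatten [seq [:: \tr (a k); \tr (a 0%N * a k); \tr (a 1%N * a k)]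
          | k <- iota 2 (size A - 2)].

(* Main.v *)
Require Import Defs.
From HB Require Import structures.
From mathcomp Require Import all_boot all_order all_algebra.
From mathcomp Require Import reals complex.
From mathcomp Require Import ring.
Import Order.TTheory GRing.Theory Num.Theory.
Local Open Scope ring_scope.

Set Implicit Arguments. Unset Strict Implicit. Unset Printing Implicit Defensive.

Section M2.
Variable F : numClosedFieldType.

Definition mk2 (a b c d : F) : 'M[F]_2 :=
  \matrix_(i < 2, j < 2) if i == 0 then (if j == 0 then a else b) else (if j == 0 then c else d).

Lemma mx2E (M : 'M[F]_2) : M = mk2 (M 0 0) (M 0 1) (M 1 0) (M 1 1).
Proof.
apply/matrixP => i j; rewrite /mk2 !mxE.
by case: i => [[|[|i]] Hi] //=; case: j => [[|[|j]] Hj] //=; congr (M _ _); apply: val_inj.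
Qed.

Lemma mk2_mul a b c d a' b' c' d' :
  mk2 a b c d * mk2 a' b' c' d' = mk2 (a*a' + b*c') (a*b' + b*d') (c*a'+d*c') (c*b'+d*d').
Proof.
apply/matrixP => i j; rewrite /mk2 !mxE !big_ord_recl big_ord0 !mxE.
case: i => [[|[|i]] Hi] //=; case: j => [[|[|j]] Hj] //=; by rewrite ?addr0.
Qed.

Lemma mk2_add a b c d a' b' c' d' :
  mk2 a b c d + mk2 a' b' c' d' = mk2 (a+a') (b+b') (c+c') (d+d').
Proof.
apply/matrixP => i j; rewrite /mk2 !mxE.
by case: i => [[|[|i]] Hi] //=; case: j => [[|[|j]] Hj].
Qed.

Lemma mk2_opp a b c d : - mk2 a b c d = mk2 (-a) (-b) (-c) (-d).
Proof.
apply/matrixP => i j; rewrite /mk2 !mxE.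
by case: i => [[|[|i]] Hi] //=; case: j => [[|[|j]] Hj].
Qed.

Lemma mk2_scale k a b c d : k *: mk2 a b c d = mk2 (k*a) (k*b) (k*c) (k*d).
Proof.
apply/matrixP => i j; rewrite /mk2 !mxE.
by case: i => [[|[|i]] Hi] //=; case: j => [[|[|j]] Hj].
Qed.

Lemma mk2_tr a b c d : (mk2 a b c d)^T = mk2 a c b d.
Proof.
apply/matrixP => i j; rewrite /mk2 !mxE.
by case: i => [[|[|i]] Hi] //=; case: j => [[|[|j]] Hj].
Qed.

Lemma mk2_1 : (1 : 'M[F]_2) = mk2 1 0 0 1.
Proof.
apply/matrixP => i j; rewrite /mk2 !mxE.
by case: i => [[|[|i]] Hi] //=; case: j => [[|[|j]] Hj].
Qed.

Lemma mk2_trace a b c d : \tr (mk2 a b c d) = a + d.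
Proof. by rewrite /mxtrace !big_ord_recl big_ord0 /mk2 !mxE /= addr0. Qed.

Lemma mk2_det a b c d : \det (mk2 a b c d) = a * d - b * c.
Proof.
rewrite (expand_det_row _ 0) /cofactor !big_ord_recl big_ord0 /mk2 !mxE /= !det_mx11 !mxE /=.
rewrite /bump /= expr0 expr1; ring.
Qed.

Lemma mk2_eq a b c d a' b' c' d' :
  mk2 a b c d = mk2 a' b' c' d' -> [/\ a = a', b = b', c = c' & d = d'].
Proof.
move=> E; have := congr1 (fun M : 'M[F]_2 => (M 0 0, M 0 1, M 1 0, M 1 1)) E.
by rewrite /mk2 !mxE /= => -[].
Qed.

Lemma mk2_ring a b c d a' b' c' d' : a = a' -> b = b' -> c = c' -> d = d' ->
  mk2 a b c d = mk2 a' b' c' d'.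
Proof. by move=> -> -> -> ->. Qed.


Lemma mx2_ind (P : 'M[F]_2 -> Prop) : (forall a b c d, P (mk2 a b c d)) -> forall M, P M.
Proof. by move=> H M; rewrite [M]mx2E. Qed.

Lemma unit_det (M : 'M[F]_2) : (M \is a GRing.unit) = (\det M != 0).
Proof. by rewrite -[M \is a _]/(M \in unitmx) unitmxE unitfE. Qed.

Lemma mk2_inv a b c d : a * d - b * c = 1 -> (mk2 a b c d)^-1 = mk2 d (-b) (-c) a.
Proof.
move=> H.
have U : mk2 a b c d \is a GRing.unit by rewrite unit_det mk2_det H oner_eq0.
rewrite -[RHS](mulKr U) mk2_mul.
rewrite (_ : a * d + b * - c = 1); last by rewrite -H; ring.
rewrite (_ : c * - b + d * a = 1); last by rewrite -H; ring.
rewrite (_ : a * - b + b * a = 0); last by ring.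
by rewrite (_ : c * d + d * - c = 0) -?mk2_1 ?mulr1 //; ring.
Qed.


Definition kap (x y z : F) := x ^+ 2 + y ^+ 2 + z ^+ 2 - x * y * z - 2.

Lemma SL2_unit (M : 'M[F]_2) : SL2 M -> M \is a GRing.unit.
Proof. by rewrite /SL2 unit_det => /eqP ->; exact: oner_neq0. Qed.

Lemma SL2_inv (M : 'M[F]_2) : SL2 M -> M^-1 = mk2 (M 1 1) (- M 0 1) (- M 1 0) (M 0 0).
Proof. by rewrite /SL2 {1 2}[M]mx2E mk2_det => /eqP H; rewrite mk2_inv. Qed.

Section Conj.
Variable g : 'M[F]_2.
Hypothesis ug : g \is a GRing.unit.

Lemma conjmM A B : conjm g (A * B) = conjm g A * conjm g B.
Proof. by rewrite /conjm !mulrA mulrVK. Qed.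

Lemma conjmV A : A \is a GRing.unit -> conjm g A^-1 = (conjm g A)^-1.
Proof.
move=> uA; rewrite /conjm !invrM ?invrK ?mulrA ?unitrV ?unitrMl ?unitrMr //.
Qed.

Lemma conjm_tr A : \tr (conjm g A) = \tr A.
Proof. by rewrite /conjm -!mulmxE mxtrace_mulC !mulmxA !mulmxE mulVr // mul1r. Qed.

Lemma conjm_det A : \det (conjm g A) = \det A.
Proof.
have : \det g != 0 by rewrite -unit_det.
by rewrite /conjm -!mulmxE !det_mulmx detV => H; rewrite mulrC mulrA mulVf // mul1r.
Qed.

Lemma conjm_SL2 A : SL2 A -> SL2 (conjm g A).
Proof. by rewrite /SL2 conjm_det. Qed.

Lemma conjmK A : conjm g (conjm g^-1 A) = A.
Proof. by rewrite /conjm invrK !mulrA mulrV // mul1r -mulrA mulrV // mulr1. Qed.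

Lemma conjm_tr2 A B : \tr (conjm g A * conjm g B) = \tr (A * B).
Proof. by rewrite -conjmM conjm_tr. Qed.

End Conj.

Lemma unitV_SL2 (g : 'M[F]_2) : SL2 g -> SL2 g^-1.
Proof.
by rewrite /SL2 -[g^-1]/(invmx g) det_inv => /eqP ->; rewrite invr1.
Qed.


Lemma cert (l r e : F) : l - r = e -> e = 0 -> l = r.
Proof. by move=> H0 H1; apply/eqP; rewrite -subr_eq0 H0 H1. Qed.

Lemma trcomm (A B : 'M[F]_2) : SL2 A -> SL2 B ->
  \tr (commm A B) = kap (\tr A) (\tr B) (\tr (A * B)).
Proof.
elim/mx2_ind: A => a b c d; elim/mx2_ind: B => a' b' c' d'.
rewrite /SL2 !mk2_det => /eqP hB /eqP hA.
rewrite /commm !mk2_inv // !mk2_mul !mk2_trace /kap.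
apply: (cert (e := (a+d)^+2 * ((a'*d'-b'*c') - 1) + (a'+d')^+2 * ((a*d-b*c) - 1)
   - 2 * ((a*d-b*c)*(a'*d'-b'*c') - 1))); first ring.
by rewrite hA hB; ring.
Qed.

Lemma detK (A B : 'M[F]_2) : SL2 A -> SL2 B ->
  \det (A * B - B * A) = 2 - kap (\tr A) (\tr B) (\tr (A * B)).
Proof.
elim/mx2_ind: A => a b c d; elim/mx2_ind: B => a' b' c' d'.
rewrite /SL2 !mk2_det => /eqP hB /eqP hA.
rewrite !mk2_mul mk2_opp mk2_add mk2_det !mk2_trace /kap.
apply: (cert (e := 4 * ((a*d-b*c)*(a'*d'-b'*c') - 1) - (a+d)^+2 * ((a'*d'-b'*c') - 1)
   - (a'+d')^+2 * ((a*d-b*c) - 1))); first ring.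
by rewrite hA hB; ring.
Qed.


Lemma intertwine_conj (h P P' : 'M[F]_2) : h \is a GRing.unit -> h * P = P' * h -> conjm h P = P'.
Proof. by move=> uh E; rewrite /conjm E mulrK. Qed.

Lemma scale_SL2 (h0 : 'M[F]_2) : \det h0 != 0 ->
  exists2 h : 'M[F]_2, SL2 h & forall P P', h0 * P = P' * h0 -> conjm h P = P'.
Proof.
move=> d0; set s := sqrtC (\det h0).
have s2 : s ^+ 2 = \det h0 by exact: sqrtCK.
have s0 : s != 0 by apply/eqP => s0; move: d0; rewrite -s2 s0 expr0n /= eqxx.
have dh : \det (s^-1 *: h0) = 1 by rewrite detZ -s2 exprVn mulVf // expf_neq0.
exists (s^-1 *: h0); first by rewrite /SL2 dh.
move=> P P' E; apply: intertwine_conj; first by rewrite unit_det dh oner_neq0.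
by rewrite -scalerAl E scalerAr.
Qed.

Lemma transport (P0 P1 P0' P1' Q Q' C0 C1 : 'M[F]_2) :
  \det Q != 0 -> \det Q' != 0 ->
  P0 * Q = Q * C0 -> P1 * Q = Q * C1 -> P0' * Q' = Q' * C0 -> P1' * Q' = Q' * C1 ->
  exists h, SL2 h /\ conjm h P0 = P0' /\ conjm h P1 = P1'.
Proof.
move=> dQ dQ' E0 E1 E0' E1'.
have uQ : Q \is a GRing.unit by rewrite unit_det.
have uQ' : Q' \is a GRing.unit by rewrite unit_det.
have key : forall P P' C, P * Q = Q * C -> P' * Q' = Q' * C ->
    (Q' * Q^-1) * P = P' * (Q' * Q^-1).
  move=> P P' C E E'.
  have H : Q^-1 * P = C * Q^-1.
    by rewrite -[Q^-1 * P](mulrK uQ) -(mulrA Q^-1 P Q) E mulrA mulVr // mul1r.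
  by rewrite -mulrA H mulrA -E' mulrA.
have dh0 : \det (Q' * Q^-1) != 0.
  by rewrite -unit_det unitrMr // unitrV.
have [h Sh Hh] := scale_SL2 dh0.
by exists h; split => //; split; apply: Hh; apply: key; eauto.
Qed.


Lemma to0 (x y : F) : x = y -> x - y = 0.
Proof. by move=> ->; rewrite subrr. Qed.

Lemma noncommon (a0 b0 c0 d0 p q r s l v1 v2 : F) : (v1 != 0) || (v2 != 0) ->
  p * v1 + q * v2 - l * v1 = 0 -> r * v1 + s * v2 - l * v2 = 0 ->
  v1 * (c0 * v1 + d0 * v2) - (a0 * v1 + b0 * v2) * v2 = 0 ->
  \det (mk2 a0 b0 c0 d0 * mk2 p q r s - mk2 p q r s * mk2 a0 b0 c0 d0) = 0.
Proof.
move=> nz e1 e2 D.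
rewrite !mk2_mul mk2_opp mk2_add mk2_det.
set E := (X in X = 0).
pose w1 := a0 * v1 + b0 * v2. pose w2 := c0 * v1 + d0 * v2.
pose K00 := b0 * r - q * c0. pose K01 := (a0 * q + b0 * s) - (p * b0 + q * d0).
pose K10 := (c0 * p + d0 * r) - (r * a0 + s * c0). pose K11 := c0 * q - r * b0.
pose ep1 := p * v1 + q * v2 - l * v1. pose ep2 := r * v1 + s * v2 - l * v2.
pose DD := v1 * (c0 * v1 + d0 * v2) - (a0 * v1 + b0 * v2) * v2.
have H1 : E * v1 * v1 = 0.
  apply: (cert (e := K11 * (v1 * (a0 * ep1 + b0 * ep2) - w1 * ep1 - q * DD)
                   - K01 * (v1 * (c0 * ep1 + d0 * ep2) - w1 * ep2 + (l - s) * DD))).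
    by rewrite /E /K11 /K01 /w1 /ep1 /ep2 /DD; ring.
  by rewrite /ep1 /ep2 /DD e1 e2 D; ring.
have H2 : E * v2 * v2 = 0.
  apply: (cert (e := - K10 * (v2 * (a0 * ep1 + b0 * ep2) - w2 * ep1 - (l - p) * DD)
                   + K00 * (v2 * (c0 * ep1 + d0 * ep2) - w2 * ep2 + r * DD))).
    by rewrite /E /K10 /K00 /w2 /ep1 /ep2 /DD; ring.
  by rewrite /ep1 /ep2 /DD e1 e2 D; ring.
case/orP: nz => nz.
  by apply/eqP; move/eqP: H1; rewrite -mulrA !mulf_eq0 (negbTE nz) !orbF.
by apply/eqP; move/eqP: H2; rewrite -mulrA !mulf_eq0 (negbTE nz) !orbF.
Qed.


Lemma frame_s (a0 b0 c0 d0 p q r s l m z : F) :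
  a0*d0 - b0*c0 - 1 = 0 -> p*s - q*r - 1 = 0 -> l * m - 1 = 0 -> p + s - (l + m) = 0 ->
  z = a0 * p + b0 * r + (c0 * q + d0 * s) ->
  \det (mk2 a0 b0 c0 d0 * mk2 p q r s - mk2 p q r s * mk2 a0 b0 c0 d0) != 0 ->
  exists Q, \det Q != 0 /\ mk2 a0 b0 c0 d0 * Q = Q * mk2 0 (-1) 1 (a0 + d0) /\
     mk2 p q r s * Q = Q * mk2 l (z - (a0 + d0) * m) 0 m.
Proof.
move=> h0 h1 hlm ht -> dK.
suff main : forall v1 v2, (v1 != 0) || (v2 != 0) ->
    p * v1 + q * v2 - l * v1 = 0 -> r * v1 + s * v2 - l * v2 = 0 ->
    exists Q, \det Q != 0 /\ mk2 a0 b0 c0 d0 * Q = Q * mk2 0 (-1) 1 (a0 + d0) /\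
     mk2 p q r s * Q = Q * mk2 l (a0 * p + b0 * r + (c0 * q + d0 * s) - (a0 + d0) * m) 0 m.
  have ep : l ^+ 2 - (p + s) * l + (p * s - q * r) = 0.
    apply: (cert (e := - (l * m - 1) - l * (p + s - (l + m)) + (p*s - q*r - 1))).
      by ring.
    by rewrite hlm ht h1; ring.
  have [nz|z1] := boolP ((q != 0) || (l - p != 0)).
    apply: (main _ _ nz); first by ring.
    apply: (cert (e := - (l^+2 - (p + s) * l + (p * s - q * r)))); first by ring.
    by rewrite ep oppr0.
  have [nz|z2] := boolP ((l - s != 0) || (r != 0)).
    apply: (main _ _ nz); last by ring.
    apply: (cert (e := - (l^+2 - (p + s) * l + (p * s - q * r)))); first by ring.
    by rewrite ep oppr0.
  move: z1 z2; rewrite !negb_or !negbK => /andP[/eqP q0 /eqP lp] /andP[/eqP ls /eqP r0].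
  have pl : p = l by apply/eqP; rewrite eq_sym -subr_eq0 lp.
  have sl : s = l by apply/eqP; rewrite eq_sym -subr_eq0 ls.
  move: dK; rewrite q0 r0 pl sl !mk2_mul mk2_opp mk2_add mk2_det.
  set E := (X in X != 0) => dK; suff : E = 0 by move/eqP; rewrite (negbTE dK).
  by rewrite /E; ring.
move=> v1 v2 nz e1 e2.
pose w1 := a0 * v1 + b0 * v2. pose w2 := c0 * v1 + d0 * v2.
exists (mk2 v1 w1 v2 w2); split; last split.
- rewrite mk2_det; apply/eqP => D; move/negP: dK; apply; apply/eqP.
  by apply: (noncommon nz e1 e2); rewrite -D /w1 /w2; ring.
- rewrite /w1 /w2 !mk2_mul; apply: mk2_ring; try ring.
    apply: (cert (e := -(a0*d0 - b0*c0 - 1)*v1)); first by ring.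
    by rewrite h0; ring.
  apply: (cert (e := -(a0*d0 - b0*c0 - 1)*v2)); first by ring.
  by rewrite h0; ring.
- rewrite !mk2_mul; apply: mk2_ring.
  + by apply: (cert (e := p * v1 + q * v2 - l * v1)); [rewrite /w1; ring | exact: e1].
  + apply: (cert (e := (a0 + d0) * (p * v1 + q * v2 - l * v1)
         - (a0 * (p * v1 + q * v2 - l * v1) + b0 * (r * v1 + s * v2 - l * v2))
         + (p + s - (l + m)) * (w1 - (a0 + d0) * v1) - m * w1 * (l * m - 1) * 0)).
      by rewrite /w1 /w2; ring.
    by rewrite e1 e2 ht; ring.
  + by apply: (cert (e := r * v1 + s * v2 - l * v2)); [rewrite /w1; ring | exact: e2].
  + apply: (cert (e := (a0 + d0) * (r * v1 + s * v2 - l * v2)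
         - (c0 * (p * v1 + q * v2 - l * v1) + d0 * (r * v1 + s * v2 - l * v2))
         + (p + s - (l + m)) * (w2 - (a0 + d0) * v2))).
      by rewrite /w1 /w2; ring.
    by rewrite e1 e2 ht; ring.
Qed.


Lemma frame (P0 P1 : 'M[F]_2) (l m : F) : SL2 P0 -> SL2 P1 -> l * m = 1 -> \tr P1 = l + m ->
  kap (\tr P0) (\tr P1) (\tr (P0 * P1)) != 2 ->
  exists Q, \det Q != 0 /\ P0 * Q = Q * mk2 0 (-1) 1 (\tr P0) /\
     P1 * Q = Q * mk2 l (\tr (P0 * P1) - \tr P0 * m) 0 m.
Proof.
move=> S0 S1 hlm ht hk.
have dK : \det (P0 * P1 - P1 * P0) != 0.
  by rewrite detK // subr_eq0 eq_sym.
clear hk; move: S0 S1 ht dK; elim/mx2_ind: P0 => a0 b0 c0 d0; elim/mx2_ind: P1 => p q r s.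
rewrite /SL2 !mk2_det => /eqP h1 /eqP h0 ht dK.
rewrite [in \tr (_ * _)]mk2_mul !mk2_trace; apply: frame_s => //; try exact: to0.
by apply: to0; rewrite -ht mk2_trace.
Qed.

Lemma conj_pair (P0 P1 X0 X1 : 'M[F]_2) : SL2 P0 -> SL2 P1 -> SL2 X0 -> SL2 X1 ->
  \tr P0 = \tr X0 -> \tr P1 = \tr X1 -> \tr (P0 * P1) = \tr (X0 * X1) ->
  kap (\tr P0) (\tr P1) (\tr (P0 * P1)) != 2 ->
  exists h, SL2 h /\ conjm h P0 = X0 /\ conjm h P1 = X1.
Proof.
move=> S0 S1 T0 T1 e0 e1 e2 hk.
set y := \tr P1.
set t := sqrtC (y ^+ 2 - 4).
have t2 : t ^+ 2 = y ^+ 2 - 4 by exact: sqrtCK.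
have two0 : (2 : F) != 0 by rewrite pnatr_eq0.
pose l := (y + t) / 2.
have ql : l ^+ 2 - y * l + 1 = 0.
  apply: (cert (e := (t ^+ 2 - (y ^+ 2 - 4)) / 4)).
    by rewrite /l; field.
  by rewrite t2 subrr mul0r.
have l0 : l != 0.
  by apply/eqP => l0; move: ql; rewrite l0 expr0n /= mulr0 !subr0 add0r => /eqP; rewrite oner_eq0.
pose m := l^-1.
have hlm : l * m = 1 by rewrite /m mulfV.
have ht : y = l + m.
  apply: (cert (e := - (l ^+ 2 - y * l + 1) * m + (y - l) * (1 - l * m))); first by ring.
  by rewrite ql hlm; ring.
have [Q [dQ [E0 E1]]] := frame S0 S1 hlm ht hk.
have hk' : kap (\tr X0) (\tr X1) (\tr (X0 * X1)) != 2 by rewrite -e0 -e1 -e2.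
have [Q' [dQ' [E0' E1']]] := frame T0 T1 hlm (etrans (esym e1) ht) hk'.
rewrite -e0 -e2 in E0' E1'.
exact: (transport dQ dQ' E0 E1 E0' E1').
Qed.


Lemma two_sol_s (a b d a' b' d' p q r s p' q' r' s' : F) :
  a * b' - a' * b + b * d' - b' * d != 0 ->
  p * s - q * r = p' * s' - q' * r' -> p + s = p' + s' ->
  a * p + b * r + (b * q + d * s) = a * p' + b * r' + (b * q' + d * s') ->
  a' * p + b' * r + (b' * q + d' * s) = a' * p' + b' * r' + (b' * q' + d' * s') ->
  mk2 p' q' r' s' = mk2 p q r s \/ mk2 p' q' r' s' = mk2 p r q s.
Proof.
set e := _ - _ + _ - _ => e0 hd E1 E2 E3.
move/to0: E1 => E1; move/to0: E2 => E2; move/to0: E3 => E3.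
pose u := p' - p. pose v := s' - s. pose w := q' - q + (r' - r).
have hu : e * u = 0.
  apply: (cert (e := - b' * (a * p + b * r + (b * q + d * s) - (a * p' + b * r' + (b * q' + d * s')))
     + b * (a' * p + b' * r + (b' * q + d' * s) - (a' * p' + b' * r' + (b' * q' + d' * s')))
     + (d * b' - d' * b) * (p + s - (p' + s')))); first by rewrite /e /u; ring.
  by rewrite E1 E2 E3; ring.
have u0 : u = 0 by move/eqP: hu; rewrite mulf_eq0 (negbTE e0) => /eqP.
have v0 : v = 0.
  apply: (cert (e := - (p + s - (p' + s')) - u)); first by rewrite /u /v; ring.
  by rewrite E1 u0; ring.
have hw : e * w = 0.
  apply: (cert (e := - (a - d) * (a' * p + b' * r + (b' * q + d' * s) - (a' * p' + b' * r' + (b' * q' + d' * s')) + a' * u + d' * v)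
     - (d' - a') * (a * p + b * r + (b * q + d * s) - (a * p' + b * r' + (b * q' + d * s')) + a * u + d * v)));
    first by rewrite /e /u /v /w; ring.
  by rewrite E2 E3 u0 v0; ring.
have w0 : w = 0 by move/eqP: hw; rewrite mulf_eq0 (negbTE e0) => /eqP.
have ep : p' = p by apply/eqP; rewrite -subr_eq0; apply/eqP.
have es : s' = s by apply/eqP; rewrite -subr_eq0; apply/eqP.
have er : r' = r + q - q'.
  by apply: (cert (e := w)); [rewrite /w; ring | exact: w0].
rewrite ep es er in hd *.
have : (q' - q) * (q' - r) = 0.
  by apply: (cert (e := (p * s - q' * (r + q - q')) - (p * s - q * r))); [ring | rewrite hd subrr].
move/eqP; rewrite mulf_eq0 !subr_eq0 => /orP[]/eqP ->.
  by left; congr mk2; ring.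
by right; congr mk2; ring.
Qed.


Lemma ex_sol_s (a b d a' b' d' s1 s2 s3 : F) :
  a * b' - a' * b + b * d' - b' * d != 0 ->
  exists p q r s, [/\ p * s - q * r = 1, p + s = s1,
    a * p + b * r + (b * q + d * s) = s2 &
    a' * p + b' * r + (b' * q + d' * s) = s3].
Proof.
set e := _ - _ + _ - _ => e0.
have two0 : (2 : F) != 0 by rewrite pnatr_eq0.
pose P0 := (s1 * (b * d' - b' * d) + b' * s2 - b * s3) / e.
pose R0 := (b * s3 - b' * s2 + s1 * (a * b' - a' * b)) / e.
pose Q0 := ((s2 * d' - s3 * d) - s1 * (a * d' - a' * d) + (a * s3 - a' * s2)) / (2 * e).
pose t := sqrtC (1 - (P0 * R0 - Q0 ^+ 2)).
have t2 : t ^+ 2 = 1 - (P0 * R0 - Q0 ^+ 2) by exact: sqrtCK.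
exists P0, (Q0 + t), (Q0 - t), R0; split.
- apply: (cert (e := t ^+ 2 - (1 - (P0 * R0 - Q0 ^+ 2)))); first by ring.
  by rewrite t2 subrr.
- by rewrite /P0 /R0 /e; field.
- by rewrite /P0 /R0 /Q0 /e; field.
- by rewrite /P0 /R0 /Q0 /e; field.
Qed.

Lemma sym_mk2 (S : 'M[F]_2) : S^T = S -> S = mk2 (S 0 0) (S 0 1) (S 0 1) (S 1 1).
Proof.
move=> H; rewrite {1}[S]mx2E; congr mk2.
by rewrite -{1}H mxE.
Qed.

Lemma sym_e (a b d a' b' d' : F) :
  \det (mk2 a b b d * mk2 a' b' b' d' - mk2 a' b' b' d' * mk2 a b b d) =
  (a * b' - a' * b + b * d' - b' * d) ^+ 2.
Proof. by rewrite !mk2_mul mk2_opp mk2_add mk2_det; ring. Qed.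

Lemma sym_e_neq0 (S0 S1 : 'M[F]_2) : S0^T = S0 -> S1^T = S1 -> SL2 S0 -> SL2 S1 ->
  kap (\tr S0) (\tr S1) (\tr (S0 * S1)) != 2 ->
  S0 0 0 * S1 0 1 - S1 0 0 * S0 0 1 + S0 0 1 * S1 1 1 - S1 0 1 * S0 1 1 != 0.
Proof.
move=> sy0 sy1 T0 T1 hk.
have : \det (S0 * S1 - S1 * S0) != 0 by rewrite detK // subr_eq0 eq_sym.
have E0 := sym_mk2 sy0; have E1 := sym_mk2 sy1.
move: (S0 0 0) (S0 0 1) (S0 1 1) E0 => a b d E0.
move: (S1 0 0) (S1 0 1) (S1 1 1) E1 => a' b' d' E1.
by rewrite E0 E1 sym_e expf_eq0.
Qed.

Lemma two_sol (S0 S1 Y Z : 'M[F]_2) : S0^T = S0 -> S1^T = S1 -> SL2 S0 -> SL2 S1 ->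
  kap (\tr S0) (\tr S1) (\tr (S0 * S1)) != 2 -> SL2 Y -> SL2 Z ->
  \tr Y = \tr Z -> \tr (S0 * Y) = \tr (S0 * Z) -> \tr (S1 * Y) = \tr (S1 * Z) ->
  Z = Y \/ Z = Y^T.
Proof.
move=> sy0 sy1 T0 T1 hk TY TZ e1 e2 e3.
have e0 := sym_e_neq0 sy0 sy1 T0 T1 hk.
move: e2 e3; rewrite (sym_mk2 sy0) (sym_mk2 sy1).
move: TY TZ e1; elim/mx2_ind: Y => p q r s; elim/mx2_ind: Z => p' q' r' s'.
rewrite /SL2 !mk2_det => /eqP hZ /eqP hY; rewrite !mk2_mul !mk2_trace mk2_tr => e1 e2 e3.
by apply: two_sol_s e0 _ e1 e2 e3; rewrite hY hZ.
Qed.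


Lemma ex_sol (S0 S1 : 'M[F]_2) (s1 s2 s3 : F) : S0^T = S0 -> S1^T = S1 -> SL2 S0 -> SL2 S1 ->
  kap (\tr S0) (\tr S1) (\tr (S0 * S1)) != 2 ->
  exists Y, [/\ SL2 Y, \tr Y = s1, \tr (S0 * Y) = s2 & \tr (S1 * Y) = s3].
Proof.
move=> sy0 sy1 T0 T1 hk.
have e0 := sym_e_neq0 sy0 sy1 T0 T1 hk.
have [p [q [r [s [h1 h2 h3 h4]]]]] := ex_sol_s s1 s2 s3 e0.
exists (mk2 p q r s); rewrite (sym_mk2 sy0) (sym_mk2 sy1) !mk2_mul !mk2_trace.
by split => //; rewrite /SL2 mk2_det h1.
Qed.

Lemma cyc (a b c d v1 v2 : F) :
  mk2 a b c d * mk2 v1 (a * v1 + b * v2) v2 (c * v1 + d * v2) =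
  mk2 v1 (a * v1 + b * v2) v2 (c * v1 + d * v2) * mk2 0 (- (a * d - b * c)) 1 (a + d).
Proof. by rewrite !mk2_mul; apply: mk2_ring; ring. Qed.

Lemma cyc_vec (a b c d : F) : a + d = 0 -> a * d - b * c != 0 ->
  exists v1 v2, v1 * (c * v1 + d * v2) - (a * v1 + b * v2) * v2 != 0.
Proof.
move=> t0 d0.
have [c0|c0] := eqVneq c 0; last first.
  by exists 1, 0; apply: contra_neq c0 => H; rewrite -H; ring.
have [b0|b0] := eqVneq b 0; last first.
  by exists 0, 1; apply: contra_neq b0 => H; rewrite -oppr0 -H; ring.
have da : d = - a by apply/eqP; rewrite -subr_eq0 opprK addrC t0.
have a0 : a != 0.
  by apply: contra_neq d0 => H; rewrite da b0 c0 H; ring.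
exists 1, 1; apply: contra_neq a0 => H.
have : (2 : F) * a = 0 by rewrite -oppr0 -H c0 b0 da; ring.
by move/eqP; rewrite mulf_eq0 pnatr_eq0 /= => /eqP.
Qed.

Lemma KB1 (B1 B2 : 'M[F]_2) : SL2 B1 -> SL2 B2 ->
  (B1 * B2 - B2 * B1) * B1 = B1^-1 * (B1 * B2 - B2 * B1).
Proof.
move=> S1 S2; rewrite (SL2_inv S1).
move: S1 S2; elim/mx2_ind: B1 => a b c d; elim/mx2_ind: B2 => a' b' c' d' _ _.
by rewrite /mk2 !mxE /= -/(mk2 _ _ _ _) -/(mk2 _ _ _ _) !mk2_mul mk2_opp !mk2_add !mk2_mul; apply: mk2_ring; ring.
Qed.


Lemma KB2 (B1 B2 : 'M[F]_2) : SL2 B1 -> SL2 B2 ->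
  (B1 * B2 - B2 * B1) * B2 = B2^-1 * (B1 * B2 - B2 * B1).
Proof.
move=> S1 S2; rewrite (SL2_inv S2).
move: S1 S2; elim/mx2_ind: B1 => a b c d; elim/mx2_ind: B2 => a' b' c' d' _ _.
by rewrite /mk2 !mxE /= -/(mk2 _ _ _ _) -/(mk2 _ _ _ _) !mk2_mul mk2_opp !mk2_add !mk2_mul; apply: mk2_ring; ring.
Qed.

Lemma sym_from (M : 'M[F]_2) (c : F) : c != 0 -> SL2 M ->
  mk2 0 c (- c) 0 * M = M^-1 * mk2 0 c (- c) 0 -> M^T = M.
Proof.
move=> c0 S; rewrite (SL2_inv S); move: S; elim/mx2_ind: M => a b b' d _.
rewrite /mk2 !mxE /= -/(mk2 _ _ _ _) -/(mk2 _ _ _ _) !mk2_mul mk2_tr => /mk2_eq [H _ _ _].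
have : c * b' = c * b by transitivity (0 * a + c * b'); [ring | rewrite H; ring].
by move/(mulfI c0) ->.
Qed.

Lemma symmetrize (B1 B2 : 'M[F]_2) : SL2 B1 -> SL2 B2 ->
  kap (\tr B1) (\tr B2) (\tr (B1 * B2)) != 2 ->
  exists g, SL2 g /\ (conjm g B1)^T = conjm g B1 /\ (conjm g B2)^T = conjm g B2.
Proof.
move=> S1 S2 hk.
pose K := B1 * B2 - B2 * B1.
have dK : \det K != 0 by rewrite detK // subr_eq0 eq_sym.
have tK : \tr K = 0 by rewrite /K raddfB /= -!mulmxE mxtrace_mulC subrr.
pose c := sqrtC (\det K).
have c2 : c ^+ 2 = \det K by exact: sqrtCK.
have c0 : c != 0 by apply/eqP => c0; move: dK; rewrite -c2 c0 expr0n /= eqxx.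
pose J := mk2 0 c (- c) 0.
have [v1 [v2 dv]] : exists v1 v2, v1 * (K 1 0 * v1 + K 1 1 * v2) - (K 0 0 * v1 + K 0 1 * v2) * v2 != 0.
  apply: cyc_vec.
    by have := mk2_trace (K 0 0) (K 0 1) (K 1 0) (K 1 1); rewrite -mx2E tK => <-.
  by have := mk2_det (K 0 0) (K 0 1) (K 1 0) (K 1 1); rewrite -mx2E => <-.
pose Q := mk2 v1 (K 0 0 * v1 + K 0 1 * v2) v2 (K 1 0 * v1 + K 1 1 * v2).
have EQ : K * Q = Q * mk2 0 (- c ^+ 2) 1 0.
  have := cyc (K 0 0) (K 0 1) (K 1 0) (K 1 1) v1 v2.
  by rewrite -(mk2_det (K 0 0)) -(mk2_trace (K 0 0) (K 0 1) (K 1 0)) -!mx2E tK -c2.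
pose Q' := mk2 1 0 0 (- c).
have EQ' : J * Q' = Q' * mk2 0 (- c ^+ 2) 1 0.
  by rewrite /J /Q' !mk2_mul; apply: mk2_ring; ring.
have dQ : \det Q != 0 by rewrite /Q mk2_det.
have dQ' : \det Q' != 0 by rewrite /Q' mk2_det mul1r mulr0 subr0 oppr_eq0.
have [g [Sg [Hg _]]] := transport dQ dQ' EQ EQ EQ' EQ'.
have ug := SL2_unit Sg.
exists g; split => //.
have key : forall B, SL2 B -> K * B = B^-1 * K -> (conjm g B)^T = conjm g B.
  move=> B SB E; apply: (sym_from c0); first exact: conjm_SL2.
  by rewrite -/J -Hg -!conjmM // E conjmM // conjmV // SL2_unit.
split; apply: key => //; [exact: KB1 | exact: KB2].
Qed.


Definition triple (X0 X1 M : 'M[F]_2) : seq F := [:: \tr M; \tr (X0 * M); \tr (X1 * M)].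

Lemma map_nth2 (T : Type) (f : 'M[F]_2 -> T) X0 X1 L :
  map (fun k => f (nth 0 [:: X0, X1 & L] k)) (iota 2 (size L)) = map f L.
Proof.
have -> : iota 2 (size L) = map (addn 2) (iota 0 (size L)) by rewrite -iotaDl.
rewrite -map_comp -[in RHS](mkseq_nth 0 L) /mkseq -map_comp.
by apply: eq_map => k.
Qed.

Lemma TnE (X0 X1 : 'M[F]_2) L :
  Tn [:: X0, X1 & L] = [:: \tr X0; \tr X1; \tr (X0 * X1)] ++ flatten (map (triple X0 X1) L).
Proof.
rewrite /Tn /= !subSS subn0; do 3 congr (_ :: _); congr flatten.
exact: (map_nth2 (triple X0 X1)).
Qed.

Lemma flatten3_inj (L1 L2 : seq (seq F)) : all (fun t => size t == 3%N) L1 ->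
  all (fun t => size t == 3%N) L2 -> flatten L1 = flatten L2 -> L1 = L2.
Proof.
elim: L1 L2 => [|t1 L1 IH] [|t2 L2] //=.
- by move=> _ /andP[/eqP s2 _]; case: t2 s2.
- by move=> /andP[/eqP s1 _]; case: t1 s1.
move=> /andP[/eqP s1 a1] /andP[/eqP s2 a2] /eqP.
rewrite eqseq_cat; last by rewrite s1 s2.
by case/andP => /eqP -> /eqP /(IH _ a1 a2) ->.
Qed.

Lemma all_triple X0 X1 L : all (fun t : seq F => size t == 3%N) (map (triple X0 X1) L).
Proof. by rewrite all_map; apply/allP. Qed.

Lemma exAs (S0 S1 : 'M[F]_2) : S0^T = S0 -> S1^T = S1 -> SL2 S0 -> SL2 S1 ->
  kap (\tr S0) (\tr S1) (\tr (S0 * S1)) != 2 ->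
  forall m (s : seq F), size s = (3 * m)%N ->
  exists As, [/\ size As = m, all SL2 As & flatten (map (triple S0 S1) As) = s].
Proof.
move=> sy0 sy1 T0 T1 hk; elim=> [|m IH] s.
  by rewrite muln0 => /size0nil ->; exists [::].
case: s => [|s1 [|s2 [|s3 s]]] /eqP; rewrite mulnS !addSn add0n ?eqSS //= => /eqP E; have [As [h1 h2 h3]] := IH _ E.
have [Y [SY t1 t2 t3]] := ex_sol s1 s2 s3 sy0 sy1 T0 T1 hk.
exists (Y :: As); split => //=; first by rewrite h1.
  by rewrite SY.
by rewrite h3 /triple t1 t2 t3.
Qed.

Lemma conjm_inv (h A X : 'M[F]_2) : h \is a GRing.unit -> conjm h A = X -> conjm h^-1 X = A.
Proof.
move=> uh <-; rewrite /conjm invrK !mulrA mulVr // mul1r mulrVK // unitrV.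
Qed.

Lemma conjm_Kinv (h Y : 'M[F]_2) : h \is a GRing.unit -> conjm h (conjm h^-1 Y) = Y.
Proof. by move=> uh; rewrite conjmK. Qed.

Lemma triple_conj (h X0 X1 M : 'M[F]_2) : h \is a GRing.unit ->
  triple (conjm h X0) (conjm h X1) (conjm h M) = triple X0 X1 M.
Proof. by move=> uh; rewrite /triple !conjm_tr2 // conjm_tr. Qed.

Lemma triple_tr (A0 A1 Y : 'M[F]_2) : A0^T = A0 -> A1^T = A1 ->
  triple A0 A1 Y^T = triple A0 A1 Y.
Proof.
move=> s0 s1; rewrite /triple mxtrace_tr.
have E : forall A, A^T = A -> \tr (A * Y^T) = \tr (A * Y).
  move=> A sA; rewrite -{1}sA -!mulmxE -trmx_mul mxtrace_tr mxtrace_mulC //.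
by rewrite !E.
Qed.

End M2.

Unset Implicit Arguments.
Local Open Scope complex_scope.

Theorem theorem1p3 (R : realType) (B1 B2 : 'M[R[i]]_2) :
  SL2 B1 -> SL2 B2 -> \tr (commm B1 B2) != 2 ->
  (exists g : 'M[R[i]]_2, SL2 g /\
      (conjm g B1)^T = conjm g B1 /\ (conjm g B2)^T = conjm g B2) /\
  (forall g : 'M[R[i]]_2, SL2 g ->
      (conjm g B1)^T = conjm g B1 -> (conjm g B2)^T = conjm g B2 ->
   forall n : nat, (3 <= n)%N ->
   forall s : seq R[i], size s = (3 * n - 6)%N ->
     (exists As : seq 'M[R[i]]_2, size As = (n - 2)%N /\ all SL2 As /\
        Tn [:: conjm g B1, conjm g B2 & As] =
          [:: \tr (conjm g B1); \tr (conjm g B2);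
              \tr (conjm g B1 * conjm g B2)] ++ s) /\
     (forall A : seq 'M[R[i]]_2,
        size A = n -> all SL2 A ->
        Tn A = [:: \tr (conjm g B1); \tr (conjm g B2);
                   \tr (conjm g B1 * conjm g B2)] ++ s ->
        \tr (commm (nth 0 A 0) (nth 0 A 1)) != 2 ->
        (nth 0 A 0)^T = nth 0 A 0 -> (nth 0 A 1)^T = nth 0 A 1 ->
        forall X : seq 'M[R[i]]_2,
          (size X = n /\ all SL2 X /\
           Tn X = [:: \tr (conjm g B1); \tr (conjm g B2);
                      \tr (conjm g B1 * conjm g B2)] ++ s)
          <->
          (exists h : 'M[R[i]]_2, SL2 h /\
           exists Cs : seq 'M[R[i]]_2, size Cs = (n - 2)%N /\
             (forall j : nat, (j < n - 2)%N ->
                nth 0 Cs j = nth 0 A j.+2 \/ nth 0 Cs j = (nth 0 A j.+2)^T) /\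
             X = map (conjm h) [:: nth 0 A 0, nth 0 A 1 & Cs]))).
Proof.
move=> S1 S2 hc.
have hk : kap (\tr B1) (\tr B2) (\tr (B1 * B2)) != 2 by rewrite -trcomm.
split; first exact: symmetrize.
move=> g Sg sy1 sy2 n n3 s ss.
have ug := SL2_unit Sg.
have T0 := conjm_SL2 ug S1; have T1 := conjm_SL2 ug S2.
move: sy1 sy2 T0 T1.
have hkM : kap (\tr (conjm g B1)) (\tr (conjm g B2)) (\tr (conjm g B1 * conjm g B2)) != 2.
  by rewrite !conjm_tr // conjm_tr2.
move: hkM.
set M0 := conjm g B1; set M1 := conjm g B2 => hkM sy1 sy2 T0 T1.
have ss' : size s = (3 * (n - 2))%N by rewrite mulnBr.
split.
  have [As [h1 h2 h3]] := exAs sy1 sy2 T0 T1 hkM ss'.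
  by exists As; split => //; split => //; rewrite TnE h3.
case=> [|A0 [|A1 LA]] sA; try by rewrite -sA in n3.
move=> aA TA hcA sA0 sA1 X; move: aA hcA sA0 sA1 => /= aA hcA sA0 sA1.
move/andP: aA => [SA0 /andP [SA1 aLA]].
have hkA : kap (\tr A0) (\tr A1) (\tr (A0 * A1)) != 2 by rewrite -trcomm.
move: TA; rewrite TnE => -[tA0 tA1 tA01 TA].
have sLA : size LA = (n - 2)%N by rewrite -sA /= !subSS subn0.
split.
- case=> sX [aX TX].
  case: X sX aX TX => [|X0 [|X1 LX]] sX; try by rewrite -sX in n3.
  move=> aX TX; move: aX => /= /andP [SX0 /andP [SX1 aLX]]; move: TX.
  rewrite TnE => -[tX0 tX1 tX01 TX].
  have [h [Sh [Eh0 Eh1]]] : exists h, SL2 h /\ conjm h A0 = X0 /\ conjm h A1 = X1.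
    by apply: (conj_pair SA0 SA1 SX0 SX1 _ _ _ hkA); [rewrite tA0 tX0 | rewrite tA1 tX1 | rewrite tA01 tX01].
  have uh := SL2_unit Sh.
  have uh' : h^-1 \is a GRing.unit by rewrite unitrV.
  have sLX : size LX = (n - 2)%N by rewrite -sX /= !subSS subn0.
  have Emap : map (triple X0 X1) LX = map (triple A0 A1) LA.
    by apply: flatten3_inj; rewrite ?all_triple // TX TA.
  exists h; split => //; exists (map (conjm h^-1) LX); split; first by rewrite size_map.
  split.
    move=> j hj; rewrite (nth_map 0); last by rewrite sLX.
    have hjA : (j < size LA)%N by rewrite sLA.
    have hjX : (j < size LX)%N by rewrite sLX.
    have := congr1 (fun t => nth [::] t j) Emap.
    rewrite !(nth_map 0) // -(triple_conj _ _ _ uh') (conjm_inv uh Eh0) (conjm_inv uh Eh1).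
    rewrite /triple => -[e1 e2 e3].
    apply: (two_sol sA0 sA1 SA0 SA1 hkA).
    + by apply: (all_nthP 0 aLA).
    + by apply: (conjm_SL2 uh'); apply: (all_nthP 0 aLX).
    + by rewrite e1.
    + by rewrite e2.
    + by rewrite e3.
  rewrite /= Eh0 Eh1 -map_comp; congr [:: _, _ & _].
  by rewrite -[LHS]map_id; apply: eq_map => Y /=; rewrite conjmK.
- case=> h [Sh [Cs [sC [hC ->]]]].
  have uh := SL2_unit Sh.
  have SCs : all SL2 Cs.
    apply/(all_nthP 0) => j; rewrite sC => hj.
    have SA : SL2 (nth 0 LA j) by apply: (all_nthP 0 aLA); rewrite sLA.
    by case: (hC j hj) => ->; rewrite // /SL2 det_tr.
  split; first by rewrite /= size_map sC -addn2 subnK //; apply: (@leq_trans 3).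
  split.
    rewrite /= !conjm_SL2 //=; apply/allP => Y /mapP [Z ZC ->].
    by apply: conjm_SL2 => //; exact: (allP SCs).
  change (Tn [:: conjm h A0, conjm h A1 & map (conjm h) Cs] = [:: \tr M0; \tr M1; \tr (M0 * M1)] ++ s); rewrite TnE (conjm_tr uh) (conjm_tr uh) (conjm_tr2 uh) tA0 tA1 tA01; congr (_ ++ _).
  rewrite -TA -map_comp; congr flatten.
  apply: (@eq_from_nth _ [::]); first by rewrite !size_map sC sLA.
  move=> j; rewrite size_map sC => hj.
  rewrite (nth_map 0) ?sC // (nth_map 0) ?sLA //= triple_conj //.
  by case: (hC j hj) => ->; rewrite ?triple_tr.
Qed.
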